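(* Let $L_x,L_z>0$ and $\mathcal{A}=\{[x,0,z]^{\mathsf{T}}:|x|\le L_x/2,\ |z|\le L_z/2\}$. For $k\in\{1,2\}$ let $r_k>0$, $\phi_k,\theta_k\in[0,\pi]$, $\Phi_k=\cos\phi_k\sin\theta_k$, $\Psi_k=\sin\phi_k\sin\theta_k$, $\Theta_k=\cos\theta_k$, and assume $\Psi_k>0$. Let $k_0>0$ and $$\mathsf{Q}_k(x,z)=\frac{\sqrt{r_k\Psi_k}\,e^{-\mathrm{j}k_0(x^2+z^2-2r_k(\Phi_kx+\Theta_kz)+r_k^2)^{1/2}}}{\sqrt{4\pi}\,(x^2+z^2-2r_k(\Phi_kx+\Theta_kz)+r_k^2)^{3/4}},\qquad \mathsf{g}_k=\int_{-L_z/2}^{L_z/2}\int_{-L_x/2}^{L_x/2}|\mathsf{Q}_k(x,z)|^2\mathrm{d}x\,\mathrm{d}z.$$ Then $$\mathsf{g}_k=\frac{1}{4\pi}\sum_{x\in\mathcal{X}_k}\sum_{z\in\mathcal{Z}_k}\arctan\!\left(\frac{xz/\Psi_k}{\sqrt{\Psi_k^2+x^2+z^2}}\right)\triangleq\mathsf{g}_k^{\mathsf{p}},$$ where $\mathcal{X}_k=\{\frac{L_x}{2r_k}+\Phi_k,\frac{L_x}{2r_k}-\Phi_k\}$ and $\mathcal{Z}_k=\{\frac{L_z}{2r_k}+\Theta_k,\frac{L_z}{2r_k}-\Theta_k\}$. Moreover, approximating each one-dimensional integral in $\rho=\frac{1}{\sqrt{\mathsf{g}_1\mathsf{g}_2}}\int_{-L_z/2}^{L_z/2}\int_{-L_x/2}^{L_x/2}\mathsf{Q}_1^*(x,z)\mathsf{Q}_2(x,z)\mathrm{d}x\,\mathrm{d}z$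 by the $n$-point Chebyshev–Gauss quadrature rule $\int_{-1}^1 f(t)\mathrm{d}t\approx\frac{\pi}{n}\sum_{j=1}^n\sqrt{1-\psi_j^2}f(\psi_j)$, $\psi_j=\cos\frac{(2j-1)\pi}{2n}$, gives $$\rho\approx\frac{\pi^2A}{4n^2\sqrt{\mathsf{g}_1^{\mathsf{p}}\mathsf{g}_2^{\mathsf{p}}}}\sum_{j=1}^n\sum_{j'=1}^n\sqrt{(1-\psi_j^2)(1-\psi_{j'}^2)}\,\mathsf{Q}_1^*\Big(\tfrac{L_x\psi_j}{2},\tfrac{L_z\psi_{j'}}{2}\Big)\mathsf{Q}_2\Big(\tfrac{L_x\psi_j}{2},\tfrac{L_z\psi_{j'}}{2}\Big)\triangleq\rho_{\mathsf{p}},$$ with $A=L_xL_z$.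
   Context: This is the planar continuous-aperture array in the $x$-$z$ plane centred at the origin; user $k$ is located at $\mathbf{s}_k=r_k[\Phi_k,\Psi_k,\Theta_k]^{\mathsf{T}}$, and $\mathsf{Q}_k(x,z)=\mathsf{G}_k([x,0,z]^{\mathsf{T}})$ where $\mathsf{G}_k(\mathbf{r})=\frac{e^{-\mathrm{j}k_0\|\mathbf{r}-\mathbf{s}_k\|}}{\sqrt{4\pi}\|\mathbf{r}-\mathbf{s}_k\|}\sqrt{\frac{|\mathbf{e}^{\mathsf{T}}(\mathbf{s}_k-\mathbf{r})|}{\|\mathbf{r}-\mathbf{s}_k\|}}$ with normal $\mathbf{e}=[0,1,0]^{\mathsf{T}}$; $\mathsf{g}_k$ is the channel gain and $\rho$ the channel correlation factor; $n$ is a complexity-vs-accuracy parameter. *)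

(* Defs.v *)
From Stdlib Require Import Reals Lra List.
Import ListNotations.
From Coquelicot Require Import Coquelicot.
Open Scope R_scope.

Definition PhiC (phi theta : R) : R := cos phi * sin theta.
Definition PsiC (phi theta : R) : R := sin phi * sin theta.
Definition ThetaC (theta : R) : R := cos theta.

(* D_k(x,z) = x^2 + z^2 - 2 r (Phi x + Theta z) + r^2  (= ||[x,0,z] - s_k||^2) *)
Definition Dk (r phi theta x z : R) : R :=
  x ^ 2 + z ^ 2 - 2 * r * (PhiC phi theta * x + ThetaC theta * z) + r ^ 2.

(* Q_k(x,z) = sqrt(r Psi) e^{-j k0 D^{1/2}} / (sqrt(4 pi) D^{3/4}),
   with e^{-j a} written out as cos a - j sin a. *)
Definition Qk (k0 r phi theta x z : R) : C :=
  let D := Dk r phi theta x z in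
  let amp := sqrt (r * PsiC phi theta) / (sqrt (4 * PI) * Rpower D (3 / 4)) in
  (amp * cos (k0 * sqrt D), - (amp * sin (k0 * sqrt D)))%R.

Definition gk (Lx Lz k0 r phi theta : R) : R :=
  RInt (fun z => RInt (fun x => (Cmod (Qk k0 r phi theta x z)) ^ 2)
                      (- (Lx / 2)) (Lx / 2))
       (- (Lz / 2)) (Lz / 2).

(* Closed form g_k^p; the sums over X_k and Z_k are over the two listed
   values (counted with multiplicity). *)
Definition gp_term (Psi x z : R) : R :=
  atan ((x * z / Psi) / sqrt (Psi ^ 2 + x ^ 2 + z ^ 2)).

Definition gkp (Lx Lz r phi theta : R) : R :=
  let Ph := PhiC phi theta in
  let Ps := PsiC phi theta in
  let Th := ThetaC theta in
  let Xs := [Lx / (2 * r) + Ph; Lx / (2 * r) - Ph]%list in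
  let Zs := [Lz / (2 * r) + Th; Lz / (2 * r) - Th]%list in
  / (4 * PI) *
  fold_right Rplus 0
    (map (fun x => fold_right Rplus 0 (map (fun z => gp_term Ps x z) Zs)) Xs).

Fixpoint sumC (n : nat) (f : nat -> C) : C :=
  match n with
  | O => RtoC 0
  | S m => Cplus (sumC m f) (f (S m))
  end.

Definition cheb_node (n j : nat) : R :=
  cos ((2 * INR j - 1) * PI / (2 * INR n)).

Definition cg_rule (n : nat) (f : R -> C) : C :=
  Cmult (RtoC (PI / INR n))
    (sumC n (fun j => Cmult (RtoC (sqrt (1 - cheb_node n j ^ 2)))
                            (f (cheb_node n j)))).

(* Approximation of rho obtained by mapping each one-dimensional integral
   int_{-L/2}^{L/2} h(u) du = (L/2) int_{-1}^1 h(L t/2) dt to [-1,1] and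
   applying the n-point Chebyshev-Gauss rule (outer variable z, inner x). *)
Definition rho_quad (n : nat) (Lx Lz k0 r1 phi1 theta1 r2 phi2 theta2 : R) : C :=
  Cmult (RtoC (/ sqrt (gk Lx Lz k0 r1 phi1 theta1 * gk Lx Lz k0 r2 phi2 theta2)))
   (Cmult (RtoC (Lz / 2))
     (cg_rule n (fun s =>
        Cmult (RtoC (Lx / 2))
          (cg_rule n (fun t =>
             Cmult (Cconj (Qk k0 r1 phi1 theta1 (Lx * t / 2) (Lz * s / 2)))
                   (Qk k0 r2 phi2 theta2 (Lx * t / 2) (Lz * s / 2))))))).

Definition rho_p (n : nat) (Lx Lz k0 r1 phi1 theta1 r2 phi2 theta2 : R) : C :=
  Cmult (RtoC (PI ^ 2 * (Lx * Lz) /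
          (4 * INR n ^ 2 * sqrt (gkp Lx Lz r1 phi1 theta1 * gkp Lx Lz r2 phi2 theta2))))
   (sumC n (fun j => sumC n (fun j' =>
      Cmult (RtoC (sqrt ((1 - cheb_node n j ^ 2) * (1 - cheb_node n j' ^ 2))))
        (Cmult (Cconj (Qk k0 r1 phi1 theta1 (Lx * cheb_node n j / 2) (Lz * cheb_node n j' / 2)))
               (Qk k0 r2 phi2 theta2 (Lx * cheb_node n j / 2) (Lz * cheb_node n j' / 2)))))).

(* Main.v *)
Require Import Defs.
From Stdlib Require Import Reals Lra Lia FunctionalExtensionality.
From Coquelicot Require Import Coquelicot.
Open Scope R_scope.
Lemma Rpow34 (D : R) : 0 < D -> Rpower D (3/4) * Rpower D (3/4) = D * sqrt D.
Proof.
intros HD. rewrite <- Rpower_plus.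
replace (3/4 + 3/4) with (1 + /2) by field.
rewrite Rpower_plus, Rpower_1, Rpower_sqrt; auto.
Qed.

Lemma Cmod_Qk2 k0 r phi theta x z : 0 < Dk r phi theta x z -> 0 <= r * PsiC phi theta ->
  Cmod (Qk k0 r phi theta x z) ^ 2 =
  (r * PsiC phi theta / (4 * PI)) / (Dk r phi theta x z * sqrt (Dk r phi theta x z)).
Proof.
intros HD Hr. unfold Qk, Cmod. cbv zeta. simpl fst; simpl snd.
rewrite pow2_sqrt.
2:{ pose proof (pow2_ge_0 (sqrt (r * PsiC phi theta) / (sqrt (4 * PI) * Rpower (Dk r phi theta x z) (3 / 4)) *
       cos (k0 * sqrt (Dk r phi theta x z)))).
    pose proof (pow2_ge_0 (- (sqrt (r * PsiC phi theta) / (sqrt (4 * PI) * Rpower (Dk r phi theta x z) (3 / 4)) *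
       sin (k0 * sqrt (Dk r phi theta x z))))). lra. }
set (t := k0 * sqrt (Dk r phi theta x z)).
assert (Hcs : sin t ^ 2 + cos t ^ 2 = 1) by (rewrite <- (sin2_cos2 t); unfold Rsqr; ring).
set (D := Dk r phi theta x z) in *.
assert (HP : 0 < 4 * PI) by (pose proof PI_RGT_0; lra).
assert (H4 := sqrt_sqrt _ (Rlt_le _ _ HP)).
assert (H4p := sqrt_lt_R0 _ HP).
assert (Hrs := sqrt_sqrt _ Hr).
assert (HR := Rpow34 D HD).
assert (HRp : 0 < Rpower D (3/4)) by (unfold Rpower; apply exp_pos).
assert (HSD : 0 < sqrt D) by (apply sqrt_lt_R0; auto).
transitivity ((sqrt (r * PsiC phi theta) * sqrt (r * PsiC phi theta)) /
   ((sqrt (4 * PI) * sqrt (4 * PI)) * (Rpower D (3/4) * Rpower D (3/4))) * (sin t ^ 2 + cos t ^2)).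
- field. split; lra.
- rewrite Hcs, H4, Hrs, HR. field. split; lra.
Qed.

Lemma inner_deriv (a B x : R) : 0 < B ->
  is_derive (fun x => (x - a) / (B * sqrt ((x - a) ^ 2 + B))) x
    (/ (((x - a) ^ 2 + B) * sqrt ((x - a) ^ 2 + B))).
Proof.
intros HB.
assert (HQ : 0 < (x - a) ^ 2 + B) by (pose proof (pow2_ge_0 (x-a)); lra).
auto_derive.
- replace ((x + - a) * ((x + - a) * 1) + B) with ((x - a) ^ 2 + B) by ring.
  split; auto. split; auto. apply Rmult_integral_contrapositive; split; [lra|]. apply Rgt_not_eq, sqrt_lt_R0; lra.
- replace ((x + - a) * ((x + - a) * 1) + B) with ((x - a) ^ 2 + B) by ring.
  replace (x + - a) with (x - a) by ring.
  assert (HS := sqrt_sqrt _ (Rlt_le _ _ HQ)).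
  assert (HSp := sqrt_lt_R0 _ HQ).
  revert HS HSp. generalize (sqrt ((x - a) ^ 2 + B)). generalize (x - a). intros v S HS HSp.
  assert (HB2 : B = S*S - v^2) by lra. rewrite HB2 in *.
  rewrite <- HS. field. lra.
Qed.
Lemma outer_deriv (U b c z : R) : 0 < c ->
  is_derive (fun z => / c * atan (U * (z - b) / (c * sqrt (U ^ 2 + (z - b) ^ 2 + c ^ 2)))) z
    (U / (((z - b) ^ 2 + c ^ 2) * sqrt (U ^ 2 + ((z - b) ^ 2 + c ^ 2)))).
Proof.
replace (U ^ 2 + ((z - b) ^ 2 + c ^ 2)) with (U ^ 2 + (z - b) ^ 2 + c ^ 2) by ring.
intros Hc.
assert (HQ : 0 < U ^ 2 + (z - b) ^ 2 + c ^ 2) by (pose proof (pow2_ge_0 U); pose proof (pow2_ge_0 (z-b)); pose proof (pow_lt c 2 Hc); lra).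
auto_derive.
- replace (U * (U * 1) + (z + - b) * ((z + - b) * 1) + c * (c * 1)) with (U ^ 2 + (z - b) ^ 2 + c ^ 2) by ring.
  split; auto. split; auto. apply Rmult_integral_contrapositive; split; [lra|]. apply Rgt_not_eq, sqrt_lt_R0; lra.
- replace (U * (U * 1) + (z + - b) * ((z + - b) * 1) + c * (c * 1)) with (U ^ 2 + (z - b) ^ 2 + c ^ 2) by ring.
  replace (z + - b) with (z - b) by ring.
  assert (HS := sqrt_sqrt _ (Rlt_le _ _ HQ)).
  assert (HSp := sqrt_lt_R0 _ HQ).
  revert HS HSp. generalize (sqrt (U ^ 2 + (z - b) ^ 2 + c ^ 2)). generalize (z - b). intros v S HS HSp.
  assert (Hv : 0 < v^2 + c^2) by (pose proof (pow2_ge_0 v); pose proof (pow_lt c 2 Hc); lra).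
  assert (Hc2 : c^2 = S*S - U^2 - v^2) by lra.
  field_simplify.
  + replace (S^3) with (S*(S*S)) by ring. replace (S^2) with (S*S) by ring. rewrite HS.
    assert (HU : 0 < U^2 + c^2) by (pose proof (pow2_ge_0 U); pose proof (pow_lt c 2 Hc); lra).
    field. split.
    * replace (c ^ 2 * S + S * v ^ 2) with (S*(v^2+c^2)) by ring. apply Rgt_not_eq, Rmult_lt_0_compat; lra.
    * replace (c ^ 3 * (S * (U ^ 2 + v ^ 2 + c ^ 2)) + c * U ^ 2 * S * v ^ 2) with (c*S*((U^2 + c^2)*(v^2+c^2))) by ring.
      apply Rgt_not_eq, Rmult_lt_0_compat; [apply Rmult_lt_0_compat; lra|]. apply Rmult_lt_0_compat; lra.
  + split; lra.
  + split. lra. split. lra. apply Rgt_not_eq. pose proof (Rmult_lt_0_compat _ _ Hc HSp). nra.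
Qed.

Lemma arg_scale r P u v : 0 < r -> 0 < P ->
  r * u * (r * v) / (r * P * sqrt ((r * u) ^ 2 + (r * v) ^ 2 + (r * P) ^ 2)) =
  (u * v / P) / sqrt (P ^ 2 + u ^ 2 + v ^ 2).
Proof.
intros Hr HP.
replace ((r * u) ^ 2 + (r * v) ^ 2 + (r * P) ^ 2) with ((r*r) * (P ^ 2 + u ^ 2 + v ^ 2)) by ring.
assert (H0 : 0 < P ^ 2 + u ^ 2 + v ^ 2) by (pose proof (pow2_ge_0 u); pose proof (pow2_ge_0 v); pose proof (pow_lt P 2 HP); lra).
rewrite sqrt_mult, sqrt_square; try nra.
assert (Hs := sqrt_lt_R0 _ H0).
field. lra.
Qed.

Lemma minusR (x y : R) : minus x y = x - y.
Proof. reflexivity. Qed.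

Lemma gp_def P u v : atan ((u * v / P) / sqrt (P ^ 2 + u ^ 2 + v ^ 2)) = gp_term P u v.
Proof. reflexivity. Qed.

Lemma gp_odd1 P x z : gp_term P (- x) z = - gp_term P x z.
Proof.
unfold gp_term. rewrite <- atan_opp. f_equal.
replace ((- x) ^ 2) with (x ^ 2) by ring. unfold Rdiv. ring.
Qed.

Lemma gp_odd2 P x z : gp_term P x (- z) = - gp_term P x z.
Proof.
unfold gp_term. rewrite <- atan_opp. f_equal.
replace ((- z) ^ 2) with (z ^ 2) by ring. unfold Rdiv. ring.
Qed.

Lemma gk_closed Lx Lz k0 r phi theta : 0 < Lx -> 0 < Lz -> 0 < r -> 0 < PsiC phi theta ->
  gk Lx Lz k0 r phi theta = gkp Lx Lz r phi theta.
Proof.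
intros HLx HLz Hr HPs.
set (Ph := PhiC phi theta). set (Ps := PsiC phi theta). set (Th := ThetaC theta).
set (a := r * Ph). set (b := r * Th). set (c := r * Ps).
set (K := r * Ps / (4 * PI)).
assert (Hc : 0 < c) by (unfold c; apply Rmult_lt_0_compat; auto).
assert (HDk : forall x z, Dk r phi theta x z = (x - a) ^ 2 + ((z - b) ^ 2 + c ^ 2)).
{ intros x z. unfold Dk, a, b, c, Ph, Ps, Th, PhiC, PsiC, ThetaC.
  assert (H1 := sin2_cos2 phi). assert (H2 := sin2_cos2 theta). unfold Rsqr in *.
  transitivity ((x - r * (cos phi * sin theta)) ^ 2 +
     ((z - r * cos theta) ^ 2 + (r * (sin phi * sin theta)) ^ 2)
     - r^2 * ((sin phi * sin phi + cos phi * cos phi - 1) * (sin theta)^2 + (sin theta * sin theta + cos theta * cos theta - 1))).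
  - ring.
  - rewrite H1, H2. ring. }
assert (HBpos : forall z, 0 < (z - b) ^ 2 + c ^ 2).
{ intro z. pose proof (pow2_ge_0 (z - b)); pose proof (pow_lt c 2 Hc); lra. }
assert (HDpos : forall x z, 0 < Dk r phi theta x z).
{ intros x z. rewrite HDk. pose proof (pow2_ge_0 (x - a)). pose proof (HBpos z). lra. }
set (U1 := Lx / 2 - a). set (U0 := - (Lx / 2) - a).
set (I := fun z => K * (U1 / (((z - b) ^ 2 + c ^ 2) * sqrt (U1 ^ 2 + ((z - b) ^ 2 + c ^ 2))) -
                        U0 / (((z - b) ^ 2 + c ^ 2) * sqrt (U0 ^ 2 + ((z - b) ^ 2 + c ^ 2))))).
assert (Hinner : forall z, RInt (fun x => Cmod (Qk k0 r phi theta x z) ^ 2) (- (Lx / 2)) (Lx / 2) = I z).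
{ intro z.
  assert (Hf : (fun x => Cmod (Qk k0 r phi theta x z) ^ 2) =
     (fun x => K * / (((x - a) ^ 2 + ((z - b) ^ 2 + c ^ 2)) * sqrt ((x - a) ^ 2 + ((z - b) ^ 2 + c ^ 2))))).
  { apply functional_extensionality. intro x. rewrite Cmod_Qk2; auto. 2: { apply Rlt_le, Rmult_lt_0_compat; auto. }
    rewrite HDk. unfold K, Ps. unfold Rdiv at 2. reflexivity. }
  rewrite Hf. apply is_RInt_unique.
  set (B := (z - b) ^ 2 + c ^ 2).
  pose (F := fun x => K * ((x - a) / (B * sqrt ((x - a) ^ 2 + B)))).
  replace (I z) with (minus (F (Lx / 2)) (F (- (Lx / 2)))).
  2: { unfold minus, plus, opp; simpl. unfold F, I, U1, U0. fold B.
        replace ((Lx / 2 - a) * ((Lx / 2 - a) * 1)) with ((Lx / 2 - a) ^ 2) by ring.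
        replace ((- (Lx / 2) - a) * ((- (Lx / 2) - a) * 1)) with ((- (Lx / 2) - a) ^ 2) by ring. ring. }
  apply (is_RInt_derive F).
  - intros x _. unfold F. apply is_derive_scal. apply inner_deriv. apply HBpos.
  - intros x _. apply (ex_derive_continuous (fun x => K * / (((x - a) ^ 2 + B) * sqrt ((x - a) ^ 2 + B)))). auto_derive.
    pose proof (HBpos z). fold B in H. pose proof (pow2_ge_0 (x-a)).
    assert (0 < (x - a) ^ 2 + B) by lra.
    replace ((x + - a) * ((x + - a) * 1) + B) with ((x - a) ^ 2 + B) by ring.
    split; [lra|]. split; [|auto].
    apply Rmult_integral_contrapositive; split; [lra|]. apply Rgt_not_eq, sqrt_lt_R0; lra. }
unfold gk.
rewrite (functional_extensionality _ _ Hinner).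
pose (G := fun z => K * (/ c * atan (U1 * (z - b) / (c * sqrt (U1 ^ 2 + (z - b) ^ 2 + c ^ 2))) -
                         / c * atan (U0 * (z - b) / (c * sqrt (U0 ^ 2 + (z - b) ^ 2 + c ^ 2))))).
assert (HR : is_RInt I (- (Lz / 2)) (Lz / 2) (minus (G (Lz / 2)) (G (- (Lz / 2))))).
{ apply (is_RInt_derive G).
  - intros z _. unfold G, I. apply is_derive_scal.
    apply (is_derive_minus (fun z => / c * atan (U1 * (z - b) / (c * sqrt (U1 ^ 2 + (z - b) ^ 2 + c ^ 2))))
                           (fun z => / c * atan (U0 * (z - b) / (c * sqrt (U0 ^ 2 + (z - b) ^ 2 + c ^ 2)))));
    apply outer_deriv; auto.
  - intros z _. apply (ex_derive_continuous I). unfold I. auto_derive.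
    pose proof (HBpos z) as HB. pose proof (pow2_ge_0 U1). pose proof (pow2_ge_0 U0).
    replace ((z + - b) * ((z + - b) * 1) + c * (c * 1)) with ((z - b) ^ 2 + c ^ 2) by ring.
    replace (U1 * (U1 * 1)) with (U1 ^ 2) by ring. replace (U0 * (U0 * 1)) with (U0 ^ 2) by ring.
    assert (HU1 : 0 < U1 ^ 2 + ((z - b) ^ 2 + c ^ 2)) by lra.
    assert (HU0 : 0 < U0 ^ 2 + ((z - b) ^ 2 + c ^ 2)) by lra.
    pose proof (sqrt_lt_R0 _ HU1). pose proof (sqrt_lt_R0 _ HU0).
    repeat split; try lra; apply Rgt_not_eq, Rmult_lt_0_compat; lra. }
rewrite (is_RInt_unique _ _ _ _ HR).
rewrite minusR. unfold G. cbv beta.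
set (xp := Lx / (2 * r) + Ph). set (xm := Lx / (2 * r) - Ph).
set (zp := Lz / (2 * r) + Th). set (zm := Lz / (2 * r) - Th).
replace U1 with (r * xm) by (unfold U1, xm, a; field; lra).
replace U0 with (r * (- xp)) by (unfold U0, xp, a; field; lra).
replace (Lz / 2 - b) with (r * zm) by (unfold zm, b; field; lra).
replace (- (Lz / 2) - b) with (r * (- zp)) by (unfold zp, b; field; lra).
unfold c. rewrite !arg_scale by auto. rewrite !gp_def.
rewrite !gp_odd1, !gp_odd2.
unfold gkp. cbv zeta. cbn [List.map List.fold_right]. fold Ph Ps Th xp xm zp zm.
assert (Ps <> 0) by (unfold Ps; lra).
unfold K. field. pose proof PI_RGT_0. repeat split; lra.
Qed.
Lemma sumC_ext n f g : (forall j, f j = g j) -> sumC n f = sumC n g.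
Proof. intros H. f_equal. apply functional_extensionality. exact H. Qed.

Lemma sumC_scal a n f : Cmult a (sumC n f) = sumC n (fun j => Cmult a (f j)).
Proof.
induction n as [|n IH]; simpl.
- apply injective_projections; simpl; ring.
- rewrite Cmult_plus_distr_l, IH. reflexivity.
Qed.

Lemma sumC_plus n f g : sumC n (fun j => Cplus (f j) (g j)) = Cplus (sumC n f) (sumC n g).
Proof.
induction n as [|n IH]; simpl.
- apply injective_projections; simpl; ring.
- rewrite IH. apply injective_projections; simpl; ring.
Qed.

Lemma sumC_swap m n (F : nat -> nat -> C) :
  sumC m (fun j => sumC n (fun j' => F j j')) = sumC n (fun j' => sumC m (fun j => F j j')).
Proof.
induction m as [|m IH]; simpl.
- clear. induction n as [|n IH]; simpl; [reflexivity|]. rewrite <- IH.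
  apply injective_projections; simpl; ring.
- rewrite IH, sumC_plus. reflexivity.
Qed.

Lemma cheb_nonneg n j : 0 <= 1 - cheb_node n j ^ 2.
Proof.
unfold cheb_node. pose proof (sin2_cos2 ((2 * INR j - 1) * PI / (2 * INR n))).
unfold Rsqr in H. pose proof (pow2_ge_0 (sin ((2 * INR j - 1) * PI / (2 * INR n)))). simpl in *. lra.
Qed.

Lemma rho_eq n Lx Lz k0 r1 phi1 theta1 r2 phi2 theta2 : (0 < n)%nat ->
  gk Lx Lz k0 r1 phi1 theta1 = gkp Lx Lz r1 phi1 theta1 ->
  gk Lx Lz k0 r2 phi2 theta2 = gkp Lx Lz r2 phi2 theta2 ->
  rho_quad n Lx Lz k0 r1 phi1 theta1 r2 phi2 theta2 =
  rho_p n Lx Lz k0 r1 phi1 theta1 r2 phi2 theta2.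
Proof.
intros Hn H1 H2.
unfold rho_quad, rho_p, cg_rule. rewrite H1, H2.
generalize (sqrt (gkp Lx Lz r1 phi1 theta1 * gkp Lx Lz r2 phi2 theta2)). intro sg.
replace (PI ^ 2 * (Lx * Lz) / (4 * INR n ^ 2 * sg)) with (PI ^ 2 * (Lx * Lz) / (4 * INR n ^ 2) * / sg) by (unfold Rdiv; rewrite (Rinv_mult (4 * INR n ^ 2)); ring).
generalize (/ sg). intro w.
assert (HnR : INR n <> 0) by (apply not_0_INR; lia).
rewrite sumC_swap. rewrite !sumC_scal.
apply sumC_ext. intro j'. rewrite !sumC_scal.
apply sumC_ext. intro j.
rewrite sqrt_mult by apply cheb_nonneg.
generalize (Cmult (Cconj (Qk k0 r1 phi1 theta1 (Lx * cheb_node n j / 2) (Lz * cheb_node n j' / 2)))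
           (Qk k0 r2 phi2 theta2 (Lx * cheb_node n j / 2) (Lz * cheb_node n j' / 2))).
intros [p1 p2].
apply injective_projections; simpl; field; auto.
Qed.

Theorem lemma4 (Lx Lz k0 r1 phi1 theta1 r2 phi2 theta2 : R) (n : nat) :
  0 < Lx -> 0 < Lz -> 0 < k0 ->
  0 < r1 -> 0 <= phi1 <= PI -> 0 <= theta1 <= PI -> 0 < PsiC phi1 theta1 ->
  0 < r2 -> 0 <= phi2 <= PI -> 0 <= theta2 <= PI -> 0 < PsiC phi2 theta2 ->
  (0 < n)%nat ->
  gk Lx Lz k0 r1 phi1 theta1 = gkp Lx Lz r1 phi1 theta1 /\
  gk Lx Lz k0 r2 phi2 theta2 = gkp Lx Lz r2 phi2 theta2 /\
  rho_quad n Lx Lz k0 r1 phi1 theta1 r2 phi2 theta2 =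
  rho_p n Lx Lz k0 r1 phi1 theta1 r2 phi2 theta2.
Proof.
intros HLx HLz Hk0 Hr1 _ _ HP1 Hr2 _ _ HP2 Hn.
assert (G1 := gk_closed Lx Lz k0 r1 phi1 theta1 HLx HLz Hr1 HP1).
assert (G2 := gk_closed Lx Lz k0 r2 phi2 theta2 HLx HLz Hr2 HP2).
split; [exact G1|]. split; [exact G2|].
apply rho_eq; auto.
Qed.
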